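(* For every complex number $a$ of modulus one, there is no $6\times 6$ complex Hadamard matrix all of whose entries lie in $\{1,a,-a^2\}$.
   Context: A complex Hadamard matrix (CHM) of order $n$ is an $n\times n$ complex matrix $H$ all of whose entries have modulus one and which satisfies $HH^\dagger=nI$. *)

(* Defs.v *)
From HB Require Import structures.
From mathcomp Require Import all_boot all_order all_algebra.
From mathcomp Require Import complex.
From mathcomp Require Import reals.
Set Implicit Arguments. Unset Strict Implicit. Unset Printing Implicit Defensive.
Import Order.TTheory GRing.Theory Num.Theory.
Local Open Scope ring_scope.
Local Open Scope complex_scope.

Definition ctrmx (R : realType) (n : nat) (H : 'M[R[i]]_n) : 'M[R[i]]_n :=
  \matrix_(i < n, j < n) (H j i)^*.

Definition is_CHM (R : realType) (n : nat) (H : 'M[R[i]]_n) : Prop :=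
  (forall i j, `|H i j| = 1) /\ H *m ctrmx H = (n%:R) %:M.

(* Main.v *)
Require Import Defs.
From HB Require Import structures.
From mathcomp Require Import all_boot all_order all_algebra.
From mathcomp Require Import complex.
From mathcomp Require Import reals.
From mathcomp Require Import ring lra zify.
Import Order.TTheory GRing.Theory Num.Theory.
Local Open Scope ring_scope.

Record coef := mkC { c0 : int; c1 : int; c2 : int; d0 : int; d1 : int }.
Definition addc (x y : coef) := mkC (c0 x + c0 y) (c1 x + c1 y) (c2 x + c2 y) (d0 x + d0 y) (d1 x + d1 y).
Definition colc (s t : nat) : coef :=
  match s, t with
  | 1, 0 => mkC 0 1 0 1 0
  | 0, 1 => mkC 0 1 0 (-1) 0
  | 2, 0 => mkC 1 0 (-2) 0 (-2)
  | 0, 2 => mkC 1 0 (-2) 0 2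
  | 1, 2 => mkC 0 (-1) 0 1 0
  | 2, 1 => mkC 0 (-1) 0 (-1) 0
  | _, _ => mkC 1 0 0 0 0
  end.
Fixpoint pc (u v : seq nat) : coef :=
  match u, v with
  | s :: u', t :: v' => addc (colc s t) (pc u' v')
  | _, _ => mkC 0 0 0 0 0
  end.
Inductive state := SF | SR of int & int | SQ of int & int & int.
Definition mkR (n d : int) := if n * n < d * d then Some (SR n d) else None.
Definition mkQ (A B C : int) := if `|A| + `|B| < `|C| then None else Some (SQ A B C).
Definition add_lin (e0 e1 : int) (s : state) : option state :=
  if e1 == 0 then (if e0 == 0 then Some s else None) else
  match s with
  | SF => mkR (- e0) e1
  | SR n d => if e0 * d + e1 * n == 0 then Some s else None
  | SQ A B C => if A * e0 * e0 - B * e0 * e1 + C * e1 * e1 == 0 then mkR (- e0) e1 else None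
  end.
Definition add_quad (r0 r1 r2 : int) (s : state) : option state :=
  if r2 == 0 then add_lin r0 r1 s else
  match s with
  | SF => mkQ r2 r1 r0
  | SR n d => if r0 * d * d + r1 * n * d + r2 * n * n == 0 then Some s else None
  | SQ A B C => add_lin (r2 * C - A * r0) (r2 * B - A * r1) s
  end.
Definition addpair (s : state) (r u : seq nat) : option state :=
  let c := pc r u in
  match add_lin (d0 c) (d1 c) s with
  | None => None
  | Some s1 => add_quad (c0 c) (c1 c) (c2 c) s1
  end.
Fixpoint addrow (s : option state) (rows : seq (seq nat)) (u : seq nat) : option state :=
  match rows with
  | [::] => s
  | r :: rows' => addrow (if s is Some s0 then addpair s0 r u else None) rows' u
  end.
Fixpoint allrows (n : nat) : seq (seq nat) :=
  if n is n'.+1 then [seq t :: r | t <- [:: 0; 1; 2]%N, r <- allrows n'] else [:: [::]].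
Definition firsts := filter (sorted leq) (allrows 6).
Fixpoint search (n : nat) (rows : seq (seq nat)) (s : state) : bool :=
  match n with
  | 0 => false
  | n'.+1 => all (fun u => match addrow (Some s) rows u with
                           | None => true
                           | Some s' => search n' (rcons rows u) s' end)
                 (if rows is [::] then firsts else allrows 6)
  end.



Section Snd.
Variable R : realFieldType.
Variable al : R.
Hypothesis Hal : al ^+ 2 < 1.

Definition sat (s : state) : Prop :=
  match s with
  | SF => True
  | SR n d => al * d%:~R = n%:~R
  | SQ A B C => A%:~R * al ^+ 2 + B%:~R * al + C%:~R = 0
  end.

Lemma sq_pos (x : R) : x != 0 -> 0 < x ^+ 2.
Proof. by move=> h; rewrite lt0r sqr_ge0 sqrf_eq0 h. Qed.

Lemma solve0 (x y : R) : x + y = 0 -> y = - x.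
Proof. by move=> h; apply/eqP; rewrite -addr_eq0 addrC; apply/eqP. Qed.

Lemma mkR_sound n d : d != 0 -> al * d%:~R = n%:~R ->
  exists s', mkR n d = Some s' /\ sat s'.
Proof.
move=> d0 H; exists (SR n d); split => //.
rewrite /mkR; suff -> : n * n < d * d by [].
rewrite -(ltr_int R) !intrM -H.
have hd : 0 < (d%:~R : R) ^+ 2 by apply: sq_pos; rewrite intr_eq0.
have h : 0 < (1 - al ^+ 2) * (d%:~R : R) ^+ 2 by apply: mulr_gt0; rewrite ?subr_gt0.
rewrite -subr_gt0; move: h; congr (0 < _); ring.
Qed.

Lemma mkQ_sound A B C : sat (SQ A B C) -> mkQ A B C = Some (SQ A B C).
Proof.
rewrite /= /mkQ => H.
suff -> : (`|A| + `|B| < `|C|) = false by [].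
apply/negbTE; rewrite -leNgt -(ler_int R) intrD !intr_norm.
rewrite (solve0 _ _ H) normrN.
apply: (le_trans (ler_normD _ _)).
have h1 : `|al| <= 1.
  have : `|al| ^+ 2 <= 1 by rewrite real_normK ?num_real // ltW.
  move=> h; have h0 : 0 <= `|al| := normr_ge0 al.
  rewrite leNgt; apply/negP => h2.
  have : 1 * 1 < `|al| * `|al| by apply: ltr_pM.
  by rewrite mul1r -expr2 ltNge h.
have e1 : `|(A%:~R:R) * al ^+ 2| <= `|A%:~R|.
  by rewrite normrM (ger0_norm (sqr_ge0 al)) ler_piMr // ltW.
have e2 : `|(B%:~R:R) * al| <= `|B%:~R| by rewrite normrM ler_piMr.
exact: lerD.
Qed.

Lemma add_lin_sound e0 e1 s : sat s -> e0%:~R + e1%:~R * al = 0 :> R ->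
  exists s', add_lin e0 e1 s = Some s' /\ sat s'.
Proof.
move=> Hs He; rewrite /add_lin.
have [e10|e10] := eqVneq e1 0.
  move: He; rewrite e10 mul0r addr0 => /eqP; rewrite intr_eq0 => /eqP ->.
  by exists s.

have Hl : al * e1%:~R = (- e0)%:~R.
  by rewrite intrN; apply/eqP; rewrite -addr_eq0 addrC mulrC He.
case: s Hs => [_|n d|A B C] /=.
- exact: mkR_sound.
- move=> Hnd; exists (SR n d); split => //.
  suff -> : e0 * d + e1 * n == 0 by [].
  rewrite -(intr_eq0 R) intrD !intrM -Hnd.
  apply/eqP; transitivity (d%:~R * (e0%:~R + e1%:~R * al) : R); first ring.
  by rewrite He mulr0.
- move=> HQ.
  suff -> : A * e0 * e0 - B * e0 * e1 + C * e1 * e1 == 0 by exact: mkR_sound.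
  rewrite -(intr_eq0 R) intrD intrB !intrM.
  apply/eqP; transitivity ((e1%:~R)^+2 * (A%:~R * al ^+ 2 + B%:~R * al + C%:~R) +
    (e0%:~R + e1%:~R * al) * (A%:~R * (e0%:~R - e1%:~R * al) - B%:~R * e1%:~R) : R); first ring.
  by rewrite HQ He !mulr0 mul0r addr0.
Qed.

Lemma add_quad_sound r0 r1 r2 s : sat s ->
  r0%:~R + r1%:~R * al + r2%:~R * al ^+ 2 = 0 :> R ->
  exists s', add_quad r0 r1 r2 s = Some s' /\ sat s'.
Proof.
move=> Hs He; rewrite /add_quad.
have [r20|r20] := eqVneq r2 0.
  by apply: add_lin_sound => //; move: He; rewrite r20 mul0r addr0.
case: s Hs => [_|n d|A B C] /=.
- exists (SQ r2 r1 r0); split; last by rewrite /= -He; ring.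
  by apply: mkQ_sound => /=; rewrite -He; ring.
- move=> Hnd; exists (SR n d); split => //.
  suff -> : r0 * d * d + r1 * n * d + r2 * n * n == 0 by [].
  rewrite -(intr_eq0 R) !intrD !intrM -Hnd.
  apply/eqP; transitivity ((d%:~R) ^+ 2 * (r0%:~R + r1%:~R * al + r2%:~R * al ^+ 2) : R); first ring.
  by rewrite He mulr0.
- move=> HQ. apply: add_lin_sound => //.
  rewrite !intrB !intrM.
  transitivity (r2%:~R * (A%:~R * al ^+ 2 + B%:~R * al + C%:~R) -
    A%:~R * (r0%:~R + r1%:~R * al + r2%:~R * al ^+ 2) : R); first ring.
  by rewrite HQ He !mulr0 subr0.
Qed.

Definition evalR (c : coef) : R := (c0 c)%:~R + (c1 c)%:~R * al + (c2 c)%:~R * al ^+ 2.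
Definition evalI (c : coef) : R := (d0 c)%:~R + (d1 c)%:~R * al.
Definition condb (r u : seq nat) : bool := (evalR (pc r u) == 0) && (evalI (pc r u) == 0).

Lemma addpair_sound s r u : sat s -> condb r u ->
  exists s', addpair s r u = Some s' /\ sat s'.
Proof.
move=> Hs /andP[/eqP HR /eqP HI]; rewrite /addpair.
have [s1 [-> H1]] := @add_lin_sound _ _ s Hs HI.
exact: (@add_quad_sound _ _ _ s1 H1 HR).
Qed.

Lemma addrow_sound u rows s : sat s -> all (fun r => condb r u) rows ->
  exists s', addrow (Some s) rows u = Some s' /\ sat s'.
Proof.
elim: rows s => [|r rows IH] s Hs /=; first by exists s.
case/andP=> Hr Hrows.
have [s1 [-> H1]] := @addpair_sound s r u Hs Hr.
exact: IH.
Qed.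

Lemma search_sound ext rows s : rows != [::] -> sat s ->
  all (fun u => u \in allrows 6) ext -> pairwise condb (rows ++ ext) ->
  search (size ext) rows s = false.
Proof.
elim: ext rows s => [|u ext IH] rows s Hne Hs //= /andP[Hu Hext] Hpw.
have Hpw' := Hpw; rewrite pairwise_cat in Hpw'.
case/and3P: Hpw' => Hall _ _.
have Hru : all (fun r => condb r u) rows.
  apply/allP => r Hr. by move/allrelP: Hall => /(_ r u Hr); apply; rewrite inE eqxx.
have [s1 [Hs1 Hsat1]] := @addrow_sound u rows s Hs Hru.
case: rows Hne Hs Hpw Hall Hru Hs1 => [//|r0 rows'] _ Hs Hpw Hall Hru Hs1.
apply/negbTE/allPn; exists u => //.
rewrite Hs1 IH //.
- by rewrite -cats1 -catA.
Qed.
End Snd.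

Local Open Scope complex_scope.

Section Cx.
Variable R : realType.
Variables al be : R.
Hypothesis Hab : al ^+ 2 + be ^+ 2 = 1.
Definition aa : R[i] := al +i* be.
Definition g (n : nat) : R[i] := match n with 0 => 1 | 1 => aa | _ => - aa ^+ 2 end.
Definition evC (c : coef) : R[i] := evalR _ al c +i* (be * evalI _ al c).

Lemma col_eval s t : (s < 3)%N -> (t < 3)%N -> g s * (g t)^* = evC (colc s t).
Proof.
have Hb : be ^+ 2 = 1 - al ^+ 2 by rewrite -Hab; ring.
case: s => [|[|[|//]]] _; case: t => [|[|[|//]]] _;
rewrite /g /evC /evalR /evalI /aa /= ?expr2; simpc;
apply/eqP; rewrite eq_complex /=; apply/andP; split; apply/eqP; 
  rewrite ?mulrN ?mulNr ?opprK; try (move: Hb; rewrite !expr2 => Hb); 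
  try ring; have Hs : al * al + be * be = 1 by rewrite -!expr2.
all: rewrite ?mulr1z.
all: try match goal with |- _ = ?r => transitivity (r * (al * al + be * be)); [ring | by rewrite Hs mulr1] end.
all: try (rewrite Hb; ring).
all: transitivity ((al * al + be * be) ^+ 2); [ring | by rewrite Hs expr1n].
Qed.

Lemma evC_add c c' : evC (addc c c') = evC c + evC c'.
Proof.
rewrite /evC /evalR /evalI /=; simpc.
by congr (_ +i* _); rewrite !intrD; ring.
Qed.

Lemma evC0 : evC (mkC 0 0 0 0 0) = 0.
Proof. by rewrite /evC /evalR /evalI /= !mulr0z !mul0r !addr0 mulr0. Qed.

Lemma sum_eval (I : Type) (F G : I -> nat) (cs : seq I) :
  (forall k, F k < 3)%N -> (forall k, G k < 3)%N ->
  \sum_(k <- cs) g (F k) * (g (G k))^* = evC (pc (map F cs) (map G cs)).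
Proof.
move=> HF HG; elim: cs => [|k cs IH]; first by rewrite big_nil evC0.
by rewrite big_cons IH /= evC_add col_eval.
Qed.
End Cx.

Lemma allrowsP n r : size r = n -> all (fun t => t < 3)%N r -> r \in allrows n.
Proof.
elim: n r => [|n IH] [|t r] //= [Hs] /andP[Ht Hr].
have Hm := IH r Hs Hr.
by case: t Ht => [|[|[|]]] // _; rewrite !mem_cat map_f ?orbT.
Qed.

Lemma orth (R : realType) (H : 'M[R[i]]_6) : H *m ctrmx H = (6%:R)%:M ->
  forall i j, i != j -> \sum_(k < 6) H i k * (H j k)^* = 0.
Proof.
move=> HH i j hij; have := congr1 (fun M : 'M[R[i]]_6 => M i j) HH; rewrite !mxE.
rewrite (negbTE hij) mulr0n => h; rewrite -[RHS]h.
by apply: eq_bigr => k _; rewrite !mxE.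
Qed.

Lemma diag6 (R : realType) (H : 'M[R[i]]_6) : H *m ctrmx H = (6%:R)%:M ->
  forall i, \sum_(k < 6) H i k * (H i k)^* = 6%:R.
Proof.
move=> HH i; have := congr1 (fun M : 'M[R[i]]_6 => M i i) HH; rewrite !mxE eqxx mulr1n => h; rewrite -[RHS]h.
by apply: eq_bigr => k _; rewrite !mxE.
Qed.

Definition sgn (R : realType) (b : bool) : R[i] := if b then 1 else -1.

Lemma conjN1 (R : realType) : (-1 : R[i])^* = -1.
Proof. by apply/eqP; rewrite eq_complex /= oppr0 oppr0 !eqxx. Qed.

Lemma conj1' (R : realType) : (1 : R[i])^* = 1.
Proof. by apply/eqP; rewrite eq_complex /= oppr0 !eqxx. Qed.

Lemma per_k (R : realType) (x y z : bool) :
  sgn R x * (sgn R x)^* + sgn R x * (sgn R z)^* + sgn R y * (sgn R x)^* + sgn R y * (sgn R z)^* = (4 * ((x == y) && (x == z)))%:R.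
Proof.
by case: x; case: y; case: z; rewrite /= ?conjN1 ?conj1'; ring.
Qed.

Lemma cplx1 (R : realType) : (1 +i* 0 : R[i]) = 1.
Proof. by []. Qed.
Lemma cplxN1 (R : realType) : ((-1) +i* 0 : R[i]) = -1.
Proof. by apply/eqP; rewrite eq_complex /= oppr0 !eqxx. Qed.

Lemma n1ne1 (R : realType) : (-1 : R[i]) != 1.
Proof. by rewrite -subr_eq0 -opprD oppr_eq0 -(natrD _ 1 1) pnatr_eq0. Qed.

Lemma search_ok : search 5 [::] SF.
Proof. vm_compute. reflexivity. Qed.

Lemma search5 : search 5 [::] SF = all (fun u => search 4 [:: u] SF) firsts.
Proof. reflexivity. Qed.

Theorem mainTheorem11 (R : realType) (a : R[i]) :
  `|a| = 1 ->
  ~ exists H : 'M[R[i]]_6,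
      is_CHM H /\ forall i j, H i j = 1 \/ H i j = a \/ H i j = - a ^+ 2.
Proof.
move=> Ha [H [[_ HH] Hent]].
have Horth := @orth R H HH.
case: a Ha Hent => al be Ha Hent.
have Hab : al ^+ 2 + be ^+ 2 = 1.
  have := sqr_normc (al +i* be); rewrite Ha expr1n.
  simpc. case. move=> h _. rewrite h. ring.
have [be0|be0] := eqVneq be 0.
  have Hal1 : al ^+ 2 = 1 by move: Hab; rewrite be0 expr0n /= addr0.
  have HA : al +i* be = 1 \/ al +i* be = -1.
    move/eqP: Hal1; rewrite sqrf_eq1 => /orP [] /eqP ->; rewrite be0;
      [left; exact: cplx1 | right; exact: cplxN1].
  have HPM : forall i k, H i k = 1 \/ H i k = -1.
    move=> i k; case: (Hent i k) => [->|[->|->]]; first by left.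
      by case: HA => ->; [left|right].
    by right; case: HA => ->; rewrite ?sqrrN expr1n.
  have Hpm : forall i k, H i k = sgn R (H i k == 1).
    by move=> i k; case: (HPM i k) => ->; rewrite /sgn ?eqxx // (negbTE (n1ne1 R)).
  pose o1 := @Ordinal 6 1 isT; pose o2 := @Ordinal 6 2 isT.
  have Hd0 := @diag6 R H HH ord0.
  have Hs6 : \sum_(k < 6) (H ord0 k * (H ord0 k)^* + H ord0 k * (H o2 k)^* +
      H o1 k * (H ord0 k)^* + H o1 k * (H o2 k)^*) = 6%:R.
    by rewrite !big_split /= Hd0 !Horth // !addr0.
  move: Hs6.
  under eq_bigr => k _ do rewrite (Hpm ord0 k) (Hpm o1 k) (Hpm o2 k) per_k.
  rewrite -natr_sum => /eqP; rewrite eqr_nat => /eqP h6.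
  suff : (4 %| 6)%N by [].
  by rewrite -h6; apply: dvdn_sum => k _; apply: dvdn_mulr.
have Hal : al ^+ 2 < 1.
  have : 0 < be ^+ 2 by apply: sq_pos.
  lra.
pose T i k : nat := if H i k == 1 then 0%N else if H i k == (al +i* be) then 1%N else 2%N.
have HT : forall i k, g _ al be (T i k) = H i k.
  move=> i k; rewrite /T; case: eqP => [->|h1] //; case: eqP => [->|h2] //.
  by case: (Hent i k) => [//|[//|->]].
have HT3 : forall i k, (T i k < 3)%N.
  by move=> i k; rewrite /T; case: eqP => _ //; case: eqP.
pose cs := sort (fun k l : 'I_6 => (T ord0 k <= T ord0 l)%N) (enum 'I_6).
pose L i := map (T i) cs.
have Hperm : perm_eq cs (index_enum 'I_6).
  rewrite /cs perm_sort.
  apply: uniq_perm; [exact: enum_uniq | exact: index_enum_uniq |].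
  by move=> x; rewrite mem_enum mem_index_enum.
have Hsum : forall i j, \sum_(k < 6) H i k * (H j k)^* = evC _ al be (pc (L i) (L j)).
  move=> i j; rewrite -(perm_big _ Hperm).
  under eq_bigr => k _ do rewrite -(HT i k) -(HT j k).
  exact: sum_eval.
have Hcond : forall i j, i != j -> condb _ al (L i) (L j).
  move=> i j hij; have := Horth i j hij; rewrite Hsum /evC; case=> hR hI.
  rewrite /condb hR eqxx /=.
  by move/eqP: hI; rewrite mulf_eq0 (negbTE be0).
have Hall : forall i, L i \in allrows 6.
  move=> i; apply: allrowsP; first by rewrite size_map size_sort size_enum_ord.
  by apply/allP => t /mapP [k _ ->].
have Hfirst : L ord0 \in firsts.
  rewrite mem_filter Hall andbT /L sorted_map.
  by apply: sort_sorted => k l; exact: leq_total.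
have := search_ok; rewrite search5 => /allP /(_ _ Hfirst).
rewrite (@search_sound _ al Hal [:: L (@Ordinal 6 1 isT); L (@Ordinal 6 2 isT); L (@Ordinal 6 3 isT); L (@Ordinal 6 4 isT)]) //=.
  by rewrite !Hall.
by rewrite !Hcond.
Qed.
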